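(* Let $w$ be a word over $\{L,R\}$ (an orbit pattern tag of an eventually fixed orbit). Then (1) $w$ forces each of its tails, i.e. every word $v'$ such that $w=vv'$ for some word $v$; and (2) every word $u$ forced by $w$ satisfies $|u|\le |w|$.
   Context: An interval map is a continuous map $f\colon I\to I$ on a compact interval $I=[a,b]$, $a<b$. Words are finite strings (including the empty word) over $\{L,R\}$; $|w|$ denotes the length of $w$. For $x\in I$ put $x_1=x$, $x_{j+1}=f(x_j)$. If $x$ is eventually fixed, let $n\ge 0$ be least such that $x_{n+1}$ is a fixed point of $f$; the orbit pattern tag of $x$ is the word of length $n$ whose $j$-th letter ($1\le j\le n$) is $L$ if $x_{j+1}<x_j$ and $R$ if $x_{j+1}>x_j$ (a fixed point has the empty word as tag). The map $f$ admits the tag $w$ if some point of $I$ has orbit pattern tag $w$. A word $w$ forces a word $u$ if every interval map admitting the tag $w$ also admits the tag $u$. *)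

(* Defs.v *)
From Stdlib Require Import Reals Lra List.
Open Scope R_scope.

Inductive letter : Type := letL | letR.

Definition word := list letter.

Definition continuous_on_interval (a b : R) (f : R -> R) : Prop :=
  forall x, a <= x <= b ->
  forall eps, 0 < eps -> exists delta, 0 < delta /\
    forall y, a <= y <= b -> Rabs (y - x) < delta -> Rabs (f y - f x) < eps.

(* f is an interval map on I = [a,b] (a < b required separately). *)
Definition interval_map (a b : R) (f : R -> R) : Prop :=
  (forall x, a <= x <= b -> a <= f x <= b) /\ continuous_on_interval a b f.

Definition is_fixed (f : R -> R) (y : R) : Prop := f y = y.

(* x_{j+1} = Nat.iter j f x.  The point x has orbit pattern tag w iff
   n = |w| is least with x_{n+1} fixed, and the j-th letter of w (0-based j)
   records whether x_{j+2} < x_{j+1} (L) or x_{j+2} > x_{j+1} (R). *)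
Definition has_tag (f : R -> R) (x : R) (w : word) : Prop :=
  is_fixed f (Nat.iter (length w) f x) /\
  (forall k, (k < length w)%nat -> ~ is_fixed f (Nat.iter k f x)) /\
  (forall j, (j < length w)%nat ->
     (nth j w letL = letL -> Nat.iter (S j) f x < Nat.iter j f x) /\
     (nth j w letL = letR -> Nat.iter (S j) f x > Nat.iter j f x)).

Definition admits_tag (a b : R) (f : R -> R) (w : word) : Prop :=
  exists x, a <= x <= b /\ has_tag f x w.

Definition forces (w u : word) : Prop :=
  forall (a b : R) (f : R -> R), a < b -> interval_map a b f ->
    admits_tag a b f w -> admits_tag a b f u.

(* Main.v *)
Require Import Defs.
From Stdlib Require Import Reals Lra List Lia.
Open Scope R_scope.

Lemma iter_in a b f x k : (forall y, a <= y <= b -> a <= f y <= b) ->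
  a <= x <= b -> a <= Nat.iter k f x <= b.
Proof. intros Hf Hx; induction k; simpl; auto. Qed.

Lemma part1 (v v' : word) : forces (v ++ v') v'.
Proof.
  intros a b f Hab [Hmap _] [x [Hx [H1 [H2 H3]]]].
  exists (Nat.iter (length v) f x). split; [apply iter_in; auto|].
  rewrite length_app in *.
  split; [|split].
  - rewrite <- Nat.iter_add. rewrite Nat.add_comm. exact H1.
  - intros k Hk. rewrite <- Nat.iter_add. apply H2. lia.
  - intros j Hj. destruct (H3 (length v + j)%nat ltac:(lia)) as [A B].
    rewrite app_nth2_plus in A, B.
    replace (S (length v + j)) with (S j + length v)%nat in A, B by lia.
    replace (length v + j)%nat with (j + length v)%nat in A, B by lia.
    rewrite !Nat.iter_add in A, B. split; auto.
Qed.

Lemma Rabs_inv a b : Rabs a <= b -> - b <= a <= b.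
Proof. intro H. pose proof (RRle_abs a). pose proof (RRle_abs (- a)). rewrite Rabs_Ropp in H1. lra. Qed.

Lemma cont_Rmax f g : continuity f -> continuity g -> continuity (fun x => Rmax (f x) (g x)).
Proof.
  intros Hf Hg.
  assert (E : forall x, Rmax (f x) (g x) = (f x + g x + Rabs (f x - g x)) / 2).
  { intro x. unfold Rmax. destruct (Rle_dec (f x) (g x)).
    - rewrite Rabs_left1 by lra. field.
    - rewrite Rabs_right by lra. field. }
  intro x. apply (continuity_pt_locally_ext (fun x => (f x + g x + Rabs (f x - g x)) / 2) _ 1 x Rlt_0_1).
  { intros; symmetry; apply E. }
  unfold Rdiv. apply continuity_pt_mult; [|apply continuity_pt_const; intros ? ?; reflexivity].
  apply continuity_pt_plus; [apply continuity_pt_plus; auto|].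
  apply (continuity_pt_comp (fun x => f x - g x) Rabs).
  - apply continuity_pt_minus; auto.
  - apply Rcontinuity_abs.
Qed.

Lemma cont_Rmin f g : continuity f -> continuity g -> continuity (fun x => Rmin (f x) (g x)).
Proof.
  intros Hf Hg.
  assert (E : forall x, Rmin (f x) (g x) = - Rmax (- f x) (- g x)).
  { intro x. unfold Rmin, Rmax. destruct (Rle_dec (f x) (g x)), (Rle_dec (- f x) (- g x)); lra. }
  intro x. apply (continuity_pt_locally_ext (fun x => - Rmax (- f x) (- g x)) _ 1 x Rlt_0_1).
  { intros; symmetry; apply E. }
  apply continuity_pt_opp. apply (cont_Rmax (fun x => - f x) (fun x => - g x));
  apply continuity_opp; auto.
Qed.

Section Constr.
Variable w : word.
Let n := length w.

Definition sg (j : nat) : R := match nth j w letL with letL => 1 | letR => -1 end.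
Definition pp (j : nat) : R := sg j * INR (n - j).
Definition hat (c x : R) : R := Rmax 0 (1 - Rabs (x - c)).
Fixpoint SS (k : nat) (x : R) : R :=
  match k with O => 0 | S k' => SS k' x + pp (S k') * hat (pp k') x end.
Definition mm (x : R) : R := Rmax (Rabs x - 1) 0.
Definition ff (x : R) : R := Rmax (- mm x) (Rmin (mm x) (SS n x)).

Lemma Rabs_sg j : Rabs (sg j) = 1.
Proof. unfold sg; destruct (nth j w letL); [apply Rabs_R1| rewrite Rabs_left; lra]. Qed.

Lemma Rabs_pp j : Rabs (pp j) = INR (n - j).
Proof. unfold pp. rewrite Rabs_mult, Rabs_sg, Rabs_right; [ring|]. apply Rle_ge, pos_INR. Qed.

Lemma mm_nonneg x : 0 <= mm x.
Proof. unfold mm, Rmax; destruct (Rle_dec _ _); lra. Qed.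

Lemma ff_bound x : Rabs (ff x) <= mm x.
Proof.
  pose proof (mm_nonneg x). unfold ff. apply Rabs_le.
  unfold Rmax, Rmin; repeat destruct (Rle_dec _ _); lra.
Qed.

Lemma hat_cont c : continuity (hat c).
Proof.
  unfold hat. apply (cont_Rmax (fun _ => 0) (fun x => 1 - Rabs (x - c))).
  - apply continuity_const; intros ? ?; reflexivity.
  - apply continuity_minus; [apply continuity_const; intros ? ?; reflexivity|].
    intro x. apply (continuity_pt_comp (fun x => x - c) Rabs).
    + apply continuity_pt_minus; [apply (derivable_continuous_pt _ _ (derivable_pt_id x))| apply continuity_pt_const; intros ? ?; reflexivity].
    + apply Rcontinuity_abs.
Qed.

Lemma SS_cont k : continuity (SS k).
Proof.
  induction k; simpl.
  - apply continuity_const; intros ? ?; reflexivity.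
  - apply continuity_plus; auto. apply continuity_scal. apply hat_cont.
Qed.

Lemma ff_cont : continuity ff.
Proof.
  unfold ff. assert (Hm : continuity mm).
  { unfold mm. apply (cont_Rmax (fun x => Rabs x - 1) (fun _ => 0)).
    - apply continuity_minus; [apply Rcontinuity_abs | apply continuity_const; intros ? ?; reflexivity].
    - apply continuity_const; intros ? ?; reflexivity. }
  apply (cont_Rmax (fun x => - mm x) (fun x => Rmin (mm x) (SS n x))).
  - apply continuity_opp; auto.
  - apply cont_Rmin; auto. apply SS_cont.
Qed.

Lemma pp_sep i j : (i < n)%nat -> (j < n)%nat -> i <> j -> 1 <= Rabs (pp i - pp j).
Proof.
  intros Hi Hj Hij.
  pose proof (Rabs_triang_inv (pp i) (pp j)) as T1.
  pose proof (Rabs_triang_inv (pp j) (pp i)) as T2.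
  replace (pp j - pp i) with (- (pp i - pp j)) in T2 by ring. rewrite Rabs_Ropp in T2.
  rewrite !Rabs_pp, !minus_INR in T1, T2 by lia.
  assert (Hgen : forall a c, (a < c)%nat -> INR a + 1 <= INR c).
  { intros a c H. rewrite <- S_INR. apply le_INR. lia. }
  destruct (Nat.lt_ge_cases i j) as [H|H].
  - pose proof (Hgen _ _ H). lra.
  - assert (j < i)%nat by lia. pose proof (Hgen _ _ H0). lra.
Qed.

Lemma hat_self c : hat c c = 1.
Proof. unfold hat. replace (c - c) with 0 by ring. rewrite Rabs_R0. unfold Rmax; destruct (Rle_dec _ _); lra. Qed.

Lemma hat_far c x : 1 <= Rabs (x - c) -> hat c x = 0.
Proof. intro H. unfold hat, Rmax; destruct (Rle_dec _ _); lra. Qed.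

Lemma SS_at k j : (j < n)%nat -> (k <= n)%nat ->
  SS k (pp j) = if Nat.ltb j k then pp (S j) else 0.
Proof.
  intros Hj. induction k; intros Hk; cbn [SS].
  - destruct (Nat.ltb_spec j 0); [lia|reflexivity].
  - rewrite IHk by lia.
    destruct (Nat.eq_dec k j) as [->|Hne].
    + rewrite hat_self. destruct (Nat.ltb_spec j j); [lia|].
      destruct (Nat.ltb_spec j (S j)); [ring|lia].
    + rewrite hat_far by (apply pp_sep; lia).
      destruct (Nat.ltb_spec j k); destruct (Nat.ltb_spec j (S k)); try ring; lia.
Qed.

Lemma ff_pp j : (j < n)%nat -> ff (pp j) = pp (S j).
Proof.
  intro Hj. unfold ff. rewrite SS_at by lia.
  destruct (Nat.ltb j n) eqn:E; [|apply Nat.ltb_ge in E; lia].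
  assert (Hm : mm (pp j) = Rabs (pp (S j))).
  { unfold mm. rewrite !Rabs_pp.
    replace (n - j)%nat with (S (n - S j)) by lia. rewrite S_INR.
    pose proof (pos_INR (n - S j)). unfold Rmax; destruct (Rle_dec _ _); lra. }
  assert (-Rabs (pp (S j)) <= pp (S j) <= Rabs (pp (S j))).
  { split; [|apply RRle_abs]. pose proof (Rabs_Ropp (pp (S j))).
    pose proof (RRle_abs (- pp (S j))). lra. }
  unfold Rmax, Rmin; repeat destruct (Rle_dec _ _); lra.
Qed.

Lemma iter_pp j : (j <= n)%nat -> Nat.iter j ff (pp 0) = pp j.
Proof.
  induction j; intro Hj; simpl; auto. rewrite IHj by lia. apply ff_pp. lia.
Qed.

Lemma iter_bound k x : Rabs (Nat.iter k ff x) <= Rmax (Rabs x - INR k) 0.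
Proof.
  induction k.
  - change (Nat.iter 0 ff x) with x. simpl INR. pose proof (Rabs_pos x).
    unfold Rmax; destruct (Rle_dec _ _); lra.
  - change (Nat.iter (S k) ff x) with (ff (Nat.iter k ff x)).
    eapply Rle_trans; [apply ff_bound|]. unfold mm.
    rewrite S_INR. revert IHk. unfold Rmax; repeat destruct (Rle_dec _ _); lra.
Qed.

Lemma ff_fixed y : ff y = y -> y = 0.
Proof.
  intro H. pose proof (ff_bound y). rewrite H in H0. unfold mm, Rmax in H0.
  destruct (Rle_dec _ _); [|lra].
  pose proof (Rabs_pos y). destruct (Req_dec y 0); auto.
  pose proof (Rabs_pos_lt y H2). lra.
Qed.

Lemma ff_map x : - INR n <= x <= INR n -> - INR n <= ff x <= INR n.
Proof.
  intro Hx. pose proof (ff_bound x). apply Rabs_inv.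
  assert (Rabs x <= INR n) by (apply Rabs_le; lra).
  unfold mm, Rmax in H; destruct (Rle_dec _ _); pose proof (Rabs_pos x); lra.
Qed.

End Constr.

Lemma cont_to_interval a b f : continuity f -> continuous_on_interval a b f.
Proof.
  intros Hf x _ eps Heps. destruct (Hf x eps Heps) as [d [Hd H]].
  exists d. split; auto. intros y _ Hy.
  destruct (Req_dec y x) as [->|Hne].
  - replace (f x - f x) with 0 by ring. rewrite Rabs_R0. auto.
  - apply (H y). split; [split; [exact I| auto]|exact Hy].
Qed.

Lemma part2 (w u : word) : forces w u -> (length u <= length w)%nat.
Proof.
  intro Hf. destruct (length w) eqn:En.
  -
    destruct u as [|l u]; simpl; [lia|]. exfalso.
    assert (Hid : interval_map 0 1 (fun x => x)).
    { split; auto. apply cont_to_interval. intros x. apply derivable_continuous_pt, derivable_pt_id. }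
    destruct (Hf 0 1 (fun x => x) Rlt_0_1 Hid) as [x [_ [_ [H _]]]].
    + exists 0. split; [lra|]. unfold has_tag; rewrite En. split; [reflexivity|]. split; intros; lia.
    + apply (H 0%nat); simpl; [lia|reflexivity].
  - set (N := S n). assert (HN : (1 <= INR N)) by (unfold N; rewrite S_INR; pose proof (pos_INR n); lra).
    assert (Hi : interval_map (- INR N) (INR N) (ff w)).
    { split; [unfold N; rewrite <- En; apply ff_map| apply cont_to_interval, ff_cont]. }
    destruct (Hf (- INR N) (INR N) (ff w) ltac:(lra) Hi) as [x [Hx [_ [H _]]]].
    + exists (pp w 0). split.
      * pose proof (Rabs_pp w 0). rewrite En, Nat.sub_0_r in H. apply Rabs_inv. rewrite H; apply Rle_refl.
      * split; [|split].
        -- rewrite iter_pp by lia. unfold pp. rewrite Nat.sub_diag. simpl.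
           unfold is_fixed. pose proof (ff_bound w 0). rewrite Rmult_0_r in *.
           unfold mm in H. rewrite Rabs_R0 in H. unfold Rmax in H. destruct (Rle_dec _ _); [|lra].
           apply Rabs_inv in H; lra.
        -- intros k Hk Hfix. rewrite iter_pp in Hfix by lia. apply ff_fixed in Hfix.
           pose proof (Rabs_pp w k). rewrite Hfix, Rabs_R0 in H.
           assert (0 < INR (length w - k)) by (apply lt_0_INR; lia). lra.
        -- intros j Hj. rewrite !iter_pp by lia. unfold pp, sg.
           rewrite !minus_INR by lia. rewrite S_INR.
           assert (INR j + 1 <= INR (length w)) by (rewrite <- S_INR; apply le_INR; lia).
           destruct (nth j w letL), (nth (S j) w letL); split; intro E; try discriminate; lra.
    + destruct (Nat.le_gt_cases (length u) N) as [Hle|Hgt]; [exact Hle|exfalso].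
      apply (H N Hgt). pose proof (iter_bound w N x).
      assert (Rabs x <= INR N) by (apply Rabs_le; lra).
      assert (Nat.iter N (ff w) x = 0).
      { apply Rabs_inv in H0. unfold Rmax in H0; destruct (Rle_dec _ _); lra. }
      rewrite H2. unfold is_fixed. pose proof (ff_bound w 0). unfold mm in H3.
      rewrite Rabs_R0 in H3. unfold Rmax in H3. destruct (Rle_dec _ _); [|lra].
      apply Rabs_inv in H3; lra.
Qed.

Theorem mainTheorem2 (w : word) :
  (forall v v' : word, w = v ++ v' -> forces w v') /\
  (forall u : word, forces w u -> (length u <= length w)%nat).
Proof.
  split.
  - intros v v' ->. apply part1.
  - apply part2.
Qed.
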